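(* Let $X$ be a countably cellular Tychonoff space and $\mathcal M$ the $\sigma$-ideal of meager subsets of $X$. Then (1) every meager subset of $X$ is contained in a meager functionally Borel subset of $X$; (2) every family of pairwise disjoint nonmeager Borel subsets of $X$ is countable; (3) $\mathcal{B}o^\pm\mathcal M=\mathcal{B}a^\pm\mathcal M$, and this $\sigma$-algebra equals the $\sigma$-algebra of subsets of $X$ having the Baire Property.
   Context: A space is countably cellular if every family of pairwise disjoint open sets is countable. A subset $A\subseteq X$ is functionally Borel if $A=f^{-1}[B]$ for a continuous $f:X\to\mathbb R^\omega$ and Borel $B\subseteq\mathbb R^\omega$. $\mathcal{B}o$ and $\mathcal{B}a$ denote the $\sigma$-algebras of Borel and functionally Borel subsets of $X$, and $\mathcal A^\pm\mathcal M$ is the smallest $\sigma$-algebra containing $\mathcal A\cup\mathcal M$. A set has the Baire Property if it belongs to the smallest $\sigma$-algebra containing all open and all meager sets. *)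

(* Defs.v *)
From HB Require Import structures.
From mathcomp Require Import all_boot all_order all_algebra.
From mathcomp Require Import all_classical all_reals all_analysis.
Set Implicit Arguments. Unset Strict Implicit. Unset Printing Implicit Defensive.
Import Order.TTheory GRing.Theory Num.Theory.
Import numFieldTopology.Exports numFieldNormedType.Exports.
Local Open Scope classical_set_scope.
Local Open Scope ring_scope.

Definition tychonoff_space (R : realType) (X : topologicalType) : Prop :=
  hausdorff_space X /\
  forall (x : X) (B : set X), closed B -> ~ B x ->
    exists f : X -> R, continuous f /\ f x = 0 /\ (forall y, B y -> f y = 1).

Definition countably_cellular (X : topologicalType) : Prop :=
  forall F : set (set X), (forall U, F U -> open U) ->
    (forall U V, F U -> F V -> U <> V -> U `&` V = set0) -> countable F.

Definition nowhere_dense_set (X : topologicalType) (A : set X) : Prop :=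
  interior (closure A) = set0.

Definition meager (X : topologicalType) (A : set X) : Prop :=
  exists F : nat -> set X, (forall n, nowhere_dense_set (F n)) /\
    A `<=` \bigcup_n F n.

Definition Borel (X : topologicalType) : set (set X) :=
  <<s [set U : set X | open U] >>.

Definition Romega (R : realType) := {ptws nat -> R}.

Definition funBorel (R : realType) (X : topologicalType) : set (set X) :=
  [set A | exists (f : X -> Romega R) (B : set (Romega R)),
     continuous f /\ Borel B /\ A = f @^-1` B].

Definition pmgen (X : Type) (A M : set (set X)) : set (set X) :=
  <<s A `|` M >>.

Definition baire_property_sets (X : topologicalType) : set (set X) :=
  <<s [set U : set X | open U] `|` [set A | meager A] >>.

(* Main.v *)
Require Import Defs.
From HB Require Import structures.
From mathcomp Require Import all_boot all_order all_algebra.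
From mathcomp Require Import all_classical all_reals all_analysis.
Set Implicit Arguments. Unset Strict Implicit. Unset Printing Implicit Defensive.
Import Order.TTheory GRing.Theory Num.Theory.
Import numFieldTopology.Exports numFieldNormedType.Exports.
Local Open Scope classical_set_scope.
Local Open Scope ring_scope.

Lemma cont_prod (R : realType) (X : topologicalType) (g : X -> Romega R) :
  (forall n, continuous (fun x => g x n)) -> continuous g.
Proof.
move=> cg x; apply/cvg_sup.
move=> i; move: x; apply/(@continuousP _ (initial_topology (fun f : Romega R => f i))) => A [B oB E].
rewrite -E.
have -> : g @^-1` ((fun f : Romega R => f i) @^-1` B) = (fun x => g x i) @^-1` B by [].
by apply: open_comp => // + _; exact: cg.
Qed.

Lemma proj_cont (R : realType) (n : nat) : continuous (fun y : Romega R => y n).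
Proof. exact: (@proj_continuous nat (fun _ => R) n). Qed.

Section topo.
Context {X : topologicalType}.

Lemma nd_intro (A : set X) :
  (forall O : set X, open O -> O !=set0 -> exists P : set X,
     [/\ open P, P !=set0, P `<=` O & P `&` A = set0]) ->
  nowhere_dense_set A.
Proof.
move=> H; rewrite /nowhere_dense_set; apply/seteqP; split => // x Hx.
have [P [oP [z Pz] sP dA]] := H _ (@open_interior _ (closure A)) (ex_intro _ x Hx).
have zcl : closure A z by apply: interior_subset; exact: sP.
have [w [Aw Pw]] := zcl P (open_nbhs_nbhs (conj oP Pz)).
by have : (P `&` A) w by []; rewrite dA.
Qed.

Lemma nd0 : nowhere_dense_set (@set0 X).
Proof. by rewrite /nowhere_dense_set closure0 interior0. Qed.

Lemma nd_sub (A B : set X) : A `<=` B -> nowhere_dense_set B -> nowhere_dense_set A.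
Proof.
move=> AB; rewrite /nowhere_dense_set => H; apply/seteqP; split=> // x Hx.
rewrite -H; exact: (interiorS (closureS AB)) _ Hx.
Qed.

Lemma nd_closure (A : set X) : nowhere_dense_set A -> nowhere_dense_set (closure A).
Proof. move=> h; have e := proj1 (closure_id (closure A)) (@closed_closure _ A); by rewrite /nowhere_dense_set -e. Qed.

Lemma nd_boundary (V : set X) : open V -> nowhere_dense_set (closure V `\` V).
Proof.
move=> oV; apply: nd_intro => O oO O0.
have [[z [Oz Vz]]|h] := pselect ((O `&` V) !=set0).
  exists (O `&` V); split; [exact: openI | by exists z | by move=> ? []|].
  by apply/seteqP; split => // y [[_ Vy] [_ nVy]].
exists O; split => //; apply/seteqP; split => // y [Oy [cly _]].
have [w [Vw Ow]] := cly O (open_nbhs_nbhs (conj oO Oy)).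
by apply: h; exists w.
Qed.

Lemma nd_meager (A : set X) : nowhere_dense_set A -> meager A.
Proof. by move=> h; exists (fun _ => A); split => // x Ax; exists 0%N. Qed.

Lemma meager_sub (A B : set X) : A `<=` B -> meager B -> meager A.
Proof. move=> AB [F [nF BF]]; exists F; split => //; exact: subset_trans BF. Qed.

Lemma meager_bigcup (A : nat -> set X) : (forall n, meager (A n)) -> meager (\bigcup_n A n).
Proof.
move=> h.
have h' : forall n, exists F : nat -> set X,
  (forall k, nowhere_dense_set (F k)) /\ A n `<=` \bigcup_k F k by exact: h.
have [F hF] := choice h'.
exists (fun m => if @unpickle (prod nat nat) m is Some p then F p.1 p.2 else set0); split.
  move=> m; case: (unpickle m) => [[n k]|] /=; [exact: (hF n).1 | exact: nd0].
move=> x [n _ Anx]; have [k _ Fx] := (hF n).2 x Anx.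
by exists (pickle (n, k)) => //; rewrite pickleK.
Qed.

Lemma meagerU (A B : set X) : meager A -> meager B -> meager (A `|` B).
Proof.
move=> mA mB; apply: (@meager_sub _ (\bigcup_n (if n is 0%N then A else B))).
  by move=> x [Ax|Bx]; [exists 0%N | exists 1%N].
by apply: meager_bigcup => -[|n].
Qed.

End topo.

Lemma Borel_preimage (Y Z : topologicalType) (f : Y -> Z) (B : set Z) :
  continuous f -> Borel B -> Borel (f @^-1` B).
Proof.
move=> cf; rewrite /Borel; move: B.
apply: (@smallest_sub _ _ _ [set B | <<s [set U : set Y | open U] >> (f @^-1` B)]).
  split.
  - exact: sigma_algebra0.
  - by move=> A /= hA; exact: sigma_algebraCD.
  - by move=> A /= hA; exact: sigma_algebra_bigcup.
move=> U oU; apply: sub_sigma_algebra; apply: open_comp => //.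
Qed.

Lemma funBorel_Borel (R : realType) (X : topologicalType) (A : set X) :
  funBorel R A -> Borel A.
Proof. by move=> [f [B [cf [BB ->]]]]; exact: Borel_preimage. Qed.

Lemma max_disjoint (T : Type) (Q : set T -> Prop) :
  exists F : set (set T),
    [/\ (forall V, F V -> Q V /\ V !=set0),
        (forall U V, F U -> F V -> U <> V -> U `&` V = set0) &
        (forall G, Q G -> G !=set0 -> exists V, F V /\ G `&` V !=set0)].
Proof.
pose P := [set F : set (set T) | (forall V, F V -> Q V /\ V !=set0) /\
   (forall U V, F U -> F V -> U <> V -> U `&` V = set0)].
have [F [[h1 h2] Fmax]] : exists F, P F /\ forall B, F `<` B -> ~ P B.
  apply: Zorn_bigcup => C CP tot; split.
    by move=> V [A CA AV]; exact: (CP _ CA).1.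
  move=> U V [A CA AU] [B CB BV] UV.
  have [AB|BA] := tot _ _ CA CB.
  - exact: (CP _ CB).2 _ _ (AB _ AU) BV UV.
  - exact: (CP _ CA).2 _ _ AU (BA _ BV) UV.
exists F; split => // G QG G0.
apply: contrapT => hG.
apply: (Fmax (F `|` [set G])).
  split; first by move=> x Fx; left.
  move=> FG; have : (F `|` [set G]) G by right.
  move/FG => FGG; apply: hG; exists G; split => //.
  by case: G0 => z Gz; exists z.
split.
  move=> V [/h1 //|-> //].
have dis U : F U -> U `&` G = set0.
  move=> FU; apply/seteqP; split => // x [Ux Gx]; apply: hG; exists U; split => //.
  by exists x.
move=> U V [FU|->] [FV|->] UV.
- exact: h2.
- exact: dis.
- by rewrite setIC; exact: dis.
- by [].
Qed.

Lemma open_coz (R : realType) (X : topologicalType) (f : X -> R) :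
  continuous f -> open [set x | f x != 0].
Proof.
move=> cf; have -> : [set x | f x != 0] = f @^-1` [set r | r != 0] by [].
by apply: open_comp; [move=> x _; exact: cf | exact: open_neq].
Qed.

Lemma cozero_approx (R : realType) (X : topologicalType) (U : set X) :
  tychonoff_space R X -> countably_cellular X -> open U ->
  exists f : nat -> X -> R, (forall n, continuous (f n)) /\
   [set x | exists n, f n x != 0] `<=` U /\
   nowhere_dense_set (U `\` [set x | exists n, f n x != 0]).
Proof.
move=> [_ ty] cc oU.
pose Q := [set G : set X | G `<=` U /\ exists f : X -> R, continuous f /\ G = [set x | f x != 0]].
have [F [F1 F2 F3]] := max_disjoint Q.
have Fopen V : F V -> open V.
  by move=> /F1 [[_ [f [cf ->]]] _]; exact: open_coz.
have [idx idxi] := elimT (countable_injP F) (cc F Fopen F2).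
have hV : forall V : set X, exists g : X -> R, F V -> continuous g /\ V = [set x | g x != 0].
  move=> V; have [FV|nFV] := pselect (F V).
    by have [[_ [g hg]] _] := F1 V FV; exists g.
  by exists (fun _ => 0).
have [fV hfV] := choice hV.
have hn : forall n : nat, exists g : X -> R, continuous g /\
    (forall x, g x != 0 <-> exists V, [/\ F V, idx V = n & V x]).
  move=> n; have [[V [FV iV]]|nV] := pselect (exists V, F V /\ idx V = n).
    exists (fV V); have [cg eV] := hfV V FV; split => // x; split.
      by move=> gx; exists V; split => //; rewrite eV.
    move=> [W [FW iW Wx]].
    have WV : W = V by apply: idxi; rewrite ?inE //; rewrite iW iV.
    rewrite WV in Wx; have : [set x | fV V x != 0] x by rewrite -eV. by [].
  exists (fun _ => 0); split; first exact: cst_continuous.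
  move=> x; split; first by rewrite eqxx.
  by move=> [W [FW iW _]]; exfalso; apply: nV; exists W.
have [f hf] := choice hn.
set W := [set x | exists n, f n x != 0].
have WE x : W x <-> exists V, F V /\ V x.
  split; first by move=> [n /(hf n).2 [V [FV _ Vx]]]; exists V.
  by move=> [V [FV Vx]]; exists (idx V); apply/(hf (idx V)).2; exists V.
have oW : open W.
  have -> : W = \bigcup_n [set x | f n x != 0].
    by apply/seteqP; split => x [n]; [exists n | move=> _; exists n].
  by apply: bigcup_open => n _; apply: open_coz; exact: (hf n).1.
exists f; split; first by move=> n; exact: (hf n).1.
split.
  by move=> x /WE [V [FV Vx]]; have [[VU _] _] := F1 V FV; exact: VU.
apply: nd_intro => O oO O0.
have [[z [Oz Wz]]|hOW] := pselect ((O `&` W) !=set0).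
  exists (O `&` W); split; [exact: openI | by exists z | by move=> ? [] |].
  by apply/seteqP; split => // y [[_ Wy] [_ nWy]].
have [[y [Oy Uy]]|hOU] := pselect ((O `&` U) !=set0); last first.
  exists O; split => //; apply/seteqP; split => // x [Ox [Ux _]].
  by apply: hOU; exists x.
exfalso.
have cC : closed (~` (O `&` U)) by apply: open_closedC; exact: openI.
have [h [ch [hy h1]]] := ty y _ cC (fun c => c (conj Oy Uy)).
pose G := [set x | 1 - h x != 0].
have GOU : G `<=` O `&` U.
  move=> x Gx; apply: contrapT => nx; move: Gx; rewrite /G /= h1 //.
  by rewrite subrr eqxx.
have QG : Q G.
  split; first by move=> x /GOU [].
  exists (fun x => 1 - h x); split => //.
  by move=> x; apply: continuousB; [exact: cst_continuous | exact: ch].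
have G0 : G !=set0 by exists y; rewrite /G /= hy subr0 oner_neq0.
have [V [FV [z [Gz Vz]]]] := F3 G QG G0.
apply: hOW; exists z; split; first by have [] := GOU z Gz.
by apply/WE; exists V.
Qed.

Lemma funBorel_coz (R : realType) (X : topologicalType) (f : nat -> X -> R) :
  (forall n, continuous (f n)) -> funBorel R [set x | exists n, f n x != 0].
Proof.
move=> cf; exists (fun x => (fun n => f n x) : Romega R).
exists [set y : Romega R | exists n, y n != 0]; split; first exact: cont_prod.
split => //; apply: sub_sigma_algebra => /=.
have -> : [set y : Romega R | exists n, y n != 0] =
   \bigcup_n ((fun y : Romega R => y n) @^-1` [set r | r != 0]).
  by apply/seteqP; split => x [n]; [exists n | move=> _; exists n].
apply: bigcup_open => n _; apply: open_comp; last exact: open_neq.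
by move=> x _; exact: proj_cont.
Qed.

Lemma part1 (R : realType) (X : topologicalType) :
  tychonoff_space R X -> countably_cellular X ->
  forall A : set X, meager A ->
     exists B : set X, A `<=` B /\ meager B /\ @funBorel R X B.
Proof.
move=> ty cc A [F [nF AF]].
have h : forall n, exists f : nat -> X -> R, (forall k, continuous (f k)) /\
   [set x | exists k, f k x != 0] `<=` ~` closure (F n) /\
   nowhere_dense_set (~` closure (F n) `\` [set x | exists k, f k x != 0]).
  move=> n; apply: cozero_approx => //; apply: closed_openC; exact: closed_closure.
have [ff hff] := choice h.
exists [set x | exists n, forall k, ff n k x = 0].
split.
  move=> x /AF [n _ Fx]; exists n => k; apply/eqP/negPn/negP => hk.
  have := (hff n).2.1 x (ex_intro _ k hk); apply.
  exact: subset_closure.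
split.
  apply: (@meager_sub _ _ (\bigcup_n (closure (F n) `|`
     (~` closure (F n) `\` [set x | exists k, ff n k x != 0])))).
    move=> x [n hn]; exists n => //.
    have [cx|ncx] := pselect (closure (F n) x); first by left.
    right; split => // -[k]; by rewrite hn eqxx.
  apply: meager_bigcup => n; apply: meagerU; apply: nd_meager.
    exact: nd_closure.
  exact: (hff n).2.2.
pose g x : Romega R := fun m => if @unpickle (prod nat nat) m is Some p then ff p.1 p.2 x else 0.
exists g; exists [set y : Romega R | exists n : nat, forall k : nat, y (pickle ((n, k) : nat * nat)) = 0].
split.
  apply: cont_prod => m; rewrite /g; case: (unpickle m) => [[n k]|] /=.
    exact: (hff n).1.
  exact: cst_continuous.
split; last first.
  by apply/seteqP; split => x [n hn]; exists n => k; move: (hn k); rewrite /g pickleK.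
have -> : [set y : Romega R | exists n : nat, forall k : nat, y (pickle ((n, k) : nat * nat)) = 0] =
  \bigcup_n (setT `\` \bigcup_k ((fun y : Romega R => y (pickle ((n, k) : nat * nat))) @^-1` [set r | r != 0])).
  apply/seteqP; split => y [n].
    move=> hn; exists n => //; split => // -[k _] /=; by rewrite hn eqxx.
  move=> _ [_ hn]; exists n => k; apply/eqP/negPn/negP => hk; apply: hn.
  by exists k.
apply: sigma_algebra_bigcup => n; apply: sigma_algebraCD; apply: sub_sigma_algebra.
apply: bigcup_open => k _; apply: open_comp; last exact: open_neq.
by move=> x _; exact: proj_cont.
Qed.

Lemma open_pm (R : realType) (X : topologicalType) (U : set X) :
  tychonoff_space R X -> countably_cellular X -> open U ->
  pmgen (@funBorel R X) (@meager X) U.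
Proof.
move=> ty cc oU; have [f [cf [WU nW]]] := cozero_approx ty cc oU.
set W := [set x | exists n, f n x != 0] in WU nW.
have -> : U = \bigcup_n (if n is 0%N then W else U `\` W).
  apply/seteqP; split => x.
    by move=> Ux; have [Wx|nWx] := pselect (W x); [exists 0%N | exists 1%N].
  by move=> [[|n] _ /=]; [exact: WU | case].
apply: sigma_algebra_bigcup => -[|n]; apply: sub_sigma_algebra.
  by left; exact: funBorel_coz.
by right; exact: nd_meager.
Qed.

Lemma banach (X : topologicalType) : countably_cellular X ->
  exists M : set X, [/\ closed M, meager M &
    forall G, open G -> meager G -> G `<=` M].
Proof.
move=> cc.
have [F [F1 F2 F3]] := max_disjoint (fun G : set X => open G /\ meager G).
have [idx idxi] := elimT (countable_injP F) (cc F (fun V FV => (F1 V FV).1.1) F2).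
set V := \bigcup_(W in F) W.
have oV : open V by apply: bigcup_open => W FW; exact: (F1 W FW).1.1.
have mV : meager V.
  apply: (@meager_sub _ _ (\bigcup_n \bigcup_(W in [set W | F W /\ idx W = n]) W)).
    by move=> x [W FW Wx]; exists (idx W) => //; exists W.
  apply: meager_bigcup => n.
  have [[W0 [FW0 i0]]|nW] := pselect (exists W, F W /\ idx W = n).
    apply: (@meager_sub _ _ W0); last exact: (F1 W0 FW0).1.2.
    move=> x [W [FW iW] Wx]; have -> : W0 = W; last by [].
    by apply: idxi; rewrite ?inE // iW i0.
  apply: (@meager_sub _ _ set0); last exact: nd_meager nd0.
  by move=> x [W [FW iW] _]; apply: nW; exists W.
exists (closure V); split.
- exact: closed_closure.
- apply: (@meager_sub _ _ (V `|` (closure V `\` V))).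
    by move=> x cx; have [Vx|nVx] := pselect (V x); [left|right].
  by apply: meagerU => //; apply: nd_meager; exact: nd_boundary.
move=> G oG mG x Gx; apply: contrapT => ncx.
have oG' : open (G `&` ~` closure V).
  by apply: openI => //; apply: closed_openC; exact: closed_closure.
have [W [FW [z [[Gz nz] Wz]]]] := F3 _ (conj oG' (meager_sub (fun y (h : (G `&` ~` closure V) y) => h.1) mG)) (ex_intro _ x (conj Gx ncx)).
by apply: nz; apply: subset_closure; exists W.
Qed.

Lemma Borel_BP (X : topologicalType) (A : set X) : Borel A ->
  exists U, open U /\ meager ((A `\` U) `|` (U `\` A)).
Proof.
move: A; apply: (@smallest_sub _ _ _ [set A | exists U, open U /\ meager ((A `\` U) `|` (U `\` A))]).
  split.
  - exists set0; split; first exact: open0.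
    by apply: (@meager_sub _ _ set0); [move=> x [[]|[]] | exact: nd_meager nd0].
  - move=> A [U [oU mU]]; exists (~` closure U); split.
      apply: closed_openC; exact: closed_closure.
    apply: (@meager_sub _ _ ((closure U `\` U) `|` ((A `\` U) `|` (U `\` A)))).
      move=> x [[[_ nAx] cx]|[ncx nAx]].
        have cx' : closure U x by apply: contrapT.
        have [Ux|nUx] := pselect (U x); last by left.
        by right; right.
      have Ax : A x by apply: contrapT => h; apply: nAx.
      right; left; split => // Ux; apply: ncx; exact: subset_closure.
    apply: meagerU => //; apply: nd_meager; exact: nd_boundary.
  - move=> A hA.
    have [U hU] := choice hA.
    exists (\bigcup_n U n); split.
      by apply: bigcup_open => n _; exact: (hU n).1.
    apply: (@meager_sub _ _ (\bigcup_n ((A n `\` U n) `|` (U n `\` A n)))).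
      move=> x [[[n _ Ax] nU]|[[n _ Ux] nA]].
        by exists n => //; left; split => // Ux; apply: nU; exists n.
      by exists n => //; right; split => // Ax; apply: nA; exists n.
    by apply: meager_bigcup => n; exact: (hU n).2.
move=> U oU; exists U; split => //.
by apply: (@meager_sub _ _ set0); [move=> x [[]|[]] | exact: nd_meager nd0].
Qed.

Lemma part2 (X : topologicalType) : countably_cellular X ->
  forall F : set (set X),
     (forall A, F A -> Borel A /\ ~ meager A) ->
     (forall A B, F A -> F B -> A <> B -> A `&` B = set0) ->
     countable F.
Proof.
move=> cc F FB Fd.
have [M [cM mM hM]] := banach cc.
have hU : forall A : set X, exists U, F A -> open U /\ meager ((A `\` U) `|` (U `\` A)).
  move=> A; have [FA|nFA] := pselect (F A).
    by have [U hU] := Borel_BP (FB A FA).1; exists U.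
  by exists set0.
have [uA huA] := choice hU.
pose U' A := uA A `\` M.
have oU' A : F A -> open (U' A).
  move=> FA; have : open (uA A `&` ~` M).
    by apply: openI; [exact: (huA A FA).1 | exact: closed_openC].
  by [].
have neU' A : F A -> U' A !=set0.
  move=> FA; apply: contrapT => h; apply: (FB A FA).2.
  apply: (@meager_sub _ _ ((A `\` uA A `|` uA A `\` A) `|` M)); last first.
    by apply: meagerU => //; exact: (huA A FA).2.
  move=> x Ax; have [Ux|nUx] := pselect (uA A x); last by left; left.
  have [Mx|nMx] := pselect (M x); first by right.
  by exfalso; apply: h; exists x.
have dU' A B : F A -> F B -> A <> B -> U' A `&` U' B = set0.
  move=> FA FB' AB.
  have : uA A `&` uA B `<=` M.
    apply: hM; first by apply: openI; [exact: (huA A FA).1 | exact: (huA B FB').1].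
    apply: (@meager_sub _ _ ((A `\` uA A `|` uA A `\` A) `|` (B `\` uA B `|` uA B `\` B))).
      move=> x [UAx UBx]; have [Ax|nAx] := pselect (A x); last by left; right.
      have [Bx|nBx] := pselect (B x); last by right; right.
      by have : (A `&` B) x by []; rewrite Fd.
    by apply: meagerU; [exact: (huA A FA).2 | exact: (huA B FB').2].
  move=> sub; apply/seteqP; split => // x [[UAx nMx] [UBx _]].
  by apply: nMx; apply: sub.
pose G := [set V | exists2 A, F A & V = U' A].
have cG : countable G.
  apply: cc.
    by move=> V [A FA ->]; exact: oU'.
  move=> V W [A FA ->] [B FB' ->] VW; apply: dU' => // AB; apply: VW; by rewrite AB.
have [idx idxi] := elimT (countable_injP G) cG.
apply/countable_injP; exists (fun A => idx (U' A)).
move=> A B; rewrite !inE => FA FB' eq.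
have eU : U' A = U' B.
  by apply: idxi => //; rewrite inE; [exists A | exists B].
apply: contrapT => AB.
have [z Uz] := neU' A FA.
have : (U' A `&` U' B) z by split => //; rewrite -eU.
by rewrite dU'.
Qed.

Local Close Scope ring_scope.

Theorem lemma7p1 (R : realType) (X : topologicalType) :
  tychonoff_space R X -> countably_cellular X ->
  (forall A : set X, meager A ->
     exists B : set X, A `<=` B /\ meager B /\ @funBorel R X B) /\
  (forall F : set (set X),
     (forall A, F A -> Borel A /\ ~ meager A) ->
     (forall A B, F A -> F B -> A <> B -> A `&` B = set0) ->
     countable F) /\
  (pmgen (@Borel X) (@meager X) = pmgen (@funBorel R X) (@meager X) /\
   pmgen (@funBorel R X) (@meager X) = @baire_property_sets X).
Proof.
move=> ty cc; split; first exact: part1.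
split; first exact: part2.
have BorelBa : forall S, Borel S -> pmgen (@funBorel R X) (@meager X) S.
  move=> S; apply: smallest_sub; first exact: smallest_sigma_algebra.
  by move=> U oU; exact: open_pm.
split.
- apply/seteqP; split.
  + apply: smallest_sub; first exact: smallest_sigma_algebra.
    move=> S [BS|mS]; first exact: BorelBa.
    by apply: sub_sigma_algebra; right.
  + apply: smallest_sub; first exact: smallest_sigma_algebra.
    move=> S [BS|mS]; apply: sub_sigma_algebra.
      by left; exact: (funBorel_Borel BS).
    by right.
- apply/seteqP; split.
  + apply: smallest_sub; first exact: smallest_sigma_algebra.
    move=> S [BS|mS]; last by apply: sub_sigma_algebra; right.
    move: (funBorel_Borel BS); clear BS; move: S; apply: smallest_sub; first exact: smallest_sigma_algebra.
    by move=> U oU; apply: sub_sigma_algebra; left.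
  + apply: smallest_sub; first exact: smallest_sigma_algebra.
    move=> S [oS|mS]; first exact: open_pm.
    by apply: sub_sigma_algebra; right.
Qed.
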